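(* Assume the $abc$-conjecture. Let $k\ge 3$ be an integer and $\epsilon>0$. Then there exist constants $c_\epsilon>0$ and $C>0$ (depending on $k$ and $\epsilon$) such that for every real $x \ge C$, the interval $(x,\ x + c_\epsilon x^{1-(2+\epsilon)/k}]$ contains at most one $k$-full number.
   Context: A positive integer $n$ is $k$-full if every prime $p$ dividing $n$ satisfies $p^k\mid n$. For a nonzero integer $m$, $\kappa(m)=\prod_{p\mid m} p$. The $abc$-conjecture is the statement: for every $\epsilon>0$ there is a constant $C_\epsilon>0$ such that for all integers $a,b,c$ with $a+b=c$ and $\gcd(a,b)=1$, one has $\max\{|a|,|b|,|c|\} \le C_\epsilon\, \kappa(abc)^{1+\epsilon}$. *)

(* Defs.v *)
From Stdlib Require Import Reals ZArith.
From mathcomp Require Import all_boot.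

Definition k_full (k n : nat) : Prop :=
  (0 < n)%N /\ forall p : nat, prime p -> (p %| n)%N -> (p ^ k %| n)%N.

Definition kappa (m : Z) : nat := (\prod_(p <- primes (Z.abs_nat m)) p)%N.

Open Scope R_scope.

Definition abc_conjecture : Prop :=
  forall eps : R, 0 < eps ->
  exists Ceps : R, 0 < Ceps /\
    forall a b c : Z, (a + b = c)%Z -> Z.gcd a b = 1%Z -> (a * b * c <> 0)%Z ->
      Rmax (IZR (Z.abs a)) (Rmax (IZR (Z.abs b)) (IZR (Z.abs c)))
        <= Ceps * Rpower (INR (kappa (a * b * c))) (1 + eps).

(* Main.v *)
Require Import Defs.
From Stdlib Require Import Reals ZArith Lra Lia.
From mathcomp Require Import all_boot zify.

Definition rad (n : nat) : nat := (\prod_(p <- primes n) p)%N.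


Lemma coprime_prod (a : nat) (s : seq nat) (F : nat -> nat) :
  (forall q, q \in s -> coprime a (F q)) -> coprime a (\prod_(q <- s) F q).
Proof.
elim: s => [|q s IH] H; first by rewrite big_nil coprimen1.
rewrite big_cons coprimeMr H ?mem_head //= IH // => r Hr.
by apply: H; rewrite in_cons Hr orbT.
Qed.

Lemma prod_dvd (s : seq nat) (k M : nat) : uniq s -> all prime s ->
  (forall p, p \in s -> (p ^ k %| M)%N) -> (\prod_(p <- s) p ^ k %| M)%N.
Proof.
elim: s => [|p s IH] Hu Hp H; first by rewrite big_nil dvd1n.
move: Hu Hp => /= /andP[Hps Hu] /andP[pp Hp].
rewrite big_cons Gauss_dvd.
  rewrite H ?mem_head //= IH // => q Hq; apply: H; by rewrite in_cons Hq orbT.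
apply: coprime_prod => q Hq.
apply: coprimeXl; apply: coprimeXr.
have qp : prime q by move/allP: Hp => /(_ q Hq).
rewrite prime_coprime // dvdn_prime2 //.
by apply/eqP => E; move: Hps; rewrite E Hq.
Qed.

Lemma dvd_prod_mem (p : nat) (s : seq nat) : p \in s -> (p %| \prod_(q <- s) q)%N.
Proof. by move=> H; rewrite (big_rem p H) /= dvdn_mulr. Qed.

Lemma prod_expn (s : seq nat) k : ((\prod_(p <- s) p) ^ k = \prod_(p <- s) p ^ k)%N.
Proof.
elim: s => [|p s IH]; first by rewrite !big_nil exp1n.
by rewrite !big_cons expnMn IH.
Qed.

Lemma rad_gt0 n : (0 < rad n)%N.
Proof.
rewrite /rad big_seq; apply: prodn_cond_gt0 => i.
by rewrite mem_primes => /and3P[/prime_gt0].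
Qed.

Lemma all_primes n : all prime (primes n).
Proof. by apply/allP => p; rewrite mem_primes => /and3P[]. Qed.

Lemma rad_kfull k m : k_full k m -> (rad m ^ k <= m)%N.
Proof.
case=> m0 H; apply: dvdn_leq => //.
rewrite /rad prod_expn; apply: prod_dvd; rewrite ?primes_uniq ?all_primes //.
by move=> p; rewrite mem_primes => /and3P[pp _ pm]; apply: H.
Qed.

Lemma rad_abc a d b m n : (0 < m)%N -> (0 < n)%N -> (0 < d)%N ->
  (a %| m)%N -> (b %| n)%N -> (rad (a * d * b) <= rad m * rad n * d)%N.
Proof.
move=> m0 n0 d0 am bn; apply: dvdn_leq.
  by rewrite !muln_gt0 !rad_gt0 d0.
have -> : rad (a * d * b) = (\prod_(p <- primes (a * d * b)) p ^ 1)%N.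
  by rewrite /rad; apply: eq_bigr => p _; rewrite expn1.
apply: prod_dvd; rewrite ?primes_uniq ?all_primes //.
move=> p; rewrite mem_primes expn1 => /and3P[pp _].
rewrite !Euclid_dvdM // => /orP[/orP[pa|pd]|pb].
- by rewrite /rad dvd_prod_mem // mem_primes pp m0 (dvdn_trans pa am).
- by rewrite pd !orbT.
- by rewrite /rad [p %| \prod_(_ <- primes n) _]dvd_prod_mem ?orbT // mem_primes pp n0 (dvdn_trans pb bn).
Qed.

Open Scope R_scope.
Lemma final_arith (kR eps K' lx L lm lb lg lr lRm lRn ld' : R) :
  3 <= kR -> 0 < eps ->
  L = lb + lg -> 0 <= lg -> 0 <= ld' ->
  lb <= K' + (1 + eps / kR) * lr ->
  lr <= lRm + lRn + ld' ->
  kR * lRm <= lm -> kR * lRn <= L -> lm <= L ->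
  ld' + lg <= - (Rabs K' + 1) / (1 + eps / kR) + (1 - (2 + eps) / kR) * lx ->
  0 <= lx -> lx <= L -> False.
Proof.
intros Hk He HL Hg Hd Hb Hr Hm Hn HmL Hdd Hx0 HxL.
set (d := eps / kR) in *.
assert (Hd0 : 0 < d) by (unfold d; apply Rdiv_lt_0_compat; lra).
set (e := 1 - (2 + eps) / kR) in *.
assert (He' : 2 / kR + e = 1 - d) by (unfold e, d; field; lra).
set (lc := - (Rabs K' + 1) / (1 + d)) in *.
assert (Hlc : (1 + d) * lc = - (Rabs K' + 1)) by (unfold lc; field; lra).
assert (Hlc0 : lc < 0).
{ apply Rmult_lt_reg_l with (1 + d); [lra|]. rewrite Hlc Rmult_0_r.
  pose proof (Rabs_pos K'); lra. }
destruct (Rle_or_lt 0 e) as [He0|He0].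
- assert (exL : e * lx <= e * L) by (apply Rmult_le_compat_l; lra).
  assert (HRm : lRm <= L / kR) by (apply Rmult_le_reg_l with kR; [lra|]; field_simplify; lra).
  assert (HRn : lRn <= L / kR) by (apply Rmult_le_reg_l with kR; [lra|]; field_simplify; lra).
  assert (lr <= 2 * L / kR + lc + e * L - lg) by lra.
  assert (Hb2 : lb <= K' + (1 + d) * (2 * L / kR + lc + e * L - lg)).
  { apply Rle_trans with (K' + (1 + d) * lr); [lra|].
    apply Rplus_le_compat_l, Rmult_le_compat_l; lra. }
  assert (E : (1 + d) * (2 * L / kR + lc + e * L - lg) = (1+d)*lc + (1 + d) * (2 / kR + e) * L - (1+d)*lg)
    by (field; lra).
  rewrite E Hlc He' in Hb2.
  assert (0 <= L) by lra.
  assert (0 <= d * d * L) by (apply Rmult_le_pos; [nra|lra]).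
  pose proof (Rle_abs K').
  assert (0 <= d * lg) by nra.
  nra.
- assert (e * lx <= 0) by nra. lra.
Qed.

Lemma INR_muln a b : INR (a * b)%N = INR a * INR b.
Proof. by rewrite mulnE mult_INR. Qed.
Lemma INR_subn a b : (a <= b)%N -> INR (b - a)%N = INR b - INR a.
Proof. move=> h; rewrite subnE minus_INR //; exact/leP. Qed.
Lemma INR_expn a k : INR (a ^ k)%N = INR a ^ k.
Proof. elim: k => [|k IH]; first by rewrite expn0. by rewrite expnS INR_muln IH. Qed.
Lemma INR_ge1 n : (0 < n)%N -> 1 <= INR n.
Proof. move=> h; change 1 with (INR 1); apply: le_INR; exact/leP. Qed.
Lemma INR_leq a b : (a <= b)%N -> INR a <= INR b.
Proof. move=> h; apply: le_INR; exact/leP. Qed.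
Lemma Zgcdn x y : Z.of_nat (gcdn x y) = Z.gcd (Z.of_nat x) (Z.of_nat y).
Proof. lia. Qed.

Lemma ln_le x y : 0 < x -> x <= y -> ln x <= ln y.
Proof.
move=> hx hy; case: (Rle_lt_or_eq_dec _ _ hy) => h.
- by apply: Rlt_le; apply: ln_increasing.
- by rewrite h; apply: Rle_refl.
Qed.

Lemma key (k : nat) (eps K x : R) (m n : nat) :
 (3 <= k)%N -> 0 < eps -> 0 < K ->
 (forall a b c : Z, (a + b = c)%Z -> Z.gcd a b = 1%Z -> (a * b * c <> 0)%Z ->
      Rmax (IZR (Z.abs a)) (Rmax (IZR (Z.abs b)) (IZR (Z.abs c)))
        <= K * Rpower (INR (kappa (a * b * c))) (1 + eps / INR k)) ->
 1 <= x -> (m < n)%N -> k_full k m -> k_full k n -> x < INR m ->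
 INR n <= x + exp (-(Rabs (ln K) + 1) / (1 + eps / INR k)) * Rpower x (1 - (2+eps)/INR k) -> False.
Proof.
move=> Hk He HK Habc Hx mn Hm Hn Hxm Hnx.
have m0 : (0 < m)%N by case: Hm.
have n0 : (0 < n)%N by case: Hn.
have g0 : (0 < gcdn m n)%N by rewrite gcdn_gt0 m0.
have [a Ha] : exists a, m = (a * gcdn m n)%N by exists (m %/ gcdn m n); rewrite divnK // dvdn_gcdl.
have [b Hb] : exists b, n = (b * gcdn m n)%N by exists (n %/ gcdn m n); rewrite divnK // dvdn_gcdr.
move: g0 Ha Hb; set g := gcdn m n => g0 Ha Hb.
have Hab1 : gcdn a b = 1%N.
  have E : (gcdn a b * g = g)%N by rewrite muln_gcdl -Ha -Hb.
  nia.
have ab : (a < b)%N by nia.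
have a0 : (0 < a)%N by nia.
have Hcop : gcdn a (b - a) = 1%N.
  by rewrite -gcdnDl subnKC // ltnW.
have H := Habc (Z.of_nat a) (Z.of_nat (b - a)) (Z.of_nat b).
have H1 : (Z.of_nat a + Z.of_nat (b - a))%Z = Z.of_nat b by lia.
have H2 : Z.gcd (Z.of_nat a) (Z.of_nat (b - a)) = 1%Z by rewrite -Zgcdn Hcop.
have H3 : (Z.of_nat a * Z.of_nat (b - a) * Z.of_nat b <> 0)%Z by nia.
move: {H H1 H2 H3} (H H1 H2 H3).
have -> : kappa (Z.of_nat a * Z.of_nat (b - a) * Z.of_nat b) = rad (a * (b - a) * b).
  have -> : (Z.of_nat a * Z.of_nat (b - a) * Z.of_nat b)%Z = Z.of_nat (a * (b - a) * b) by lia.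
  by rewrite /kappa Zabs2Nat.id.
have -> : IZR (Z.abs (Z.of_nat b)) = INR b by rewrite INR_IZR_INZ; congr IZR; lia.
move=> Hmax.
have HB : INR b <= K * Rpower (INR (rad (a * (b - a) * b))) (1 + eps / INR k).
  apply: Rle_trans Hmax; apply: Rle_trans (Rmax_r _ _); exact: Rmax_r.
have Hrad : (rad (a * (b - a) * b) <= rad m * rad n * (b - a))%N.
  apply: rad_abc => //; [by rewrite subn_gt0 | by rewrite Ha dvdn_mulr | by rewrite Hb dvdn_mulr].
have Hkm := rad_kfull k m Hm.
have Hkn := rad_kfull k n Hn.
have ba0 : (0 < b - a)%N by rewrite subn_gt0.
have b0 : (0 < b)%N by apply: leq_trans ab.
have Rr1 := INR_ge1 _ (rad_gt0 (a * (b - a) * b)).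
have Rm1 := INR_ge1 _ (rad_gt0 m).
have Rn1 := INR_ge1 _ (rad_gt0 n).
have D1 := INR_ge1 _ ba0.
have G1 := INR_ge1 _ g0.
have B1 := INR_ge1 _ b0.
have A1 := INR_ge1 _ a0.
have EN : INR n = INR b * INR g by rewrite Hb INR_muln.
have EM : INR m = INR a * INR g by rewrite Ha INR_muln.
have ED : INR (b - a) = INR b - INR a by apply: INR_subn; apply: ltnW.
have Hdiff : INR (b - a) * INR g <= exp (-(Rabs (ln K) + 1) / (1 + eps / INR k)) * Rpower x (1 - (2+eps)/INR k).
  rewrite ED; nra.
have kR3 : 3 <= INR k by apply: Rle_trans (INR_leq 3 k Hk); simpl; lra.
apply: (final_arith (INR k) eps (ln K) (ln x) (ln (INR n)) (ln (INR m)) (ln (INR b)) (ln (INR g))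
   (ln (INR (rad (a * (b - a) * b)))) (ln (INR (rad m))) (ln (INR (rad n))) (ln (INR (b - a)))).
- exact: kR3.
- exact: He.
- by rewrite EN ln_mult; lra.
- rewrite -ln_1; apply: ln_le; lra.
- rewrite -ln_1; apply: ln_le; lra.
- have := ln_le (INR b) _ ltac:(lra) HB.
  rewrite ln_mult //; last exact: exp_pos.
  by rewrite /Rpower ln_exp.
- have := INR_leq _ _ Hrad; rewrite !INR_muln => Hr.
  have := ln_le (INR (rad (a * (b - a) * b))) _ ltac:(lra) Hr.
  rewrite !ln_mult; try lra; nra.
- have := INR_leq _ _ Hkm; rewrite INR_expn => Hr.
  have := ln_le (INR (rad m) ^ k) _ ltac:(apply: pow_lt; lra) Hr.
  by rewrite ln_pow; lra.
- have := INR_leq _ _ Hkn; rewrite INR_expn => Hr.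
  have := ln_le (INR (rad n) ^ k) _ ltac:(apply: pow_lt; lra) Hr.
  by rewrite ln_pow; lra.
- apply: ln_le; first lra. apply: INR_leq; exact: ltnW.
- have := ln_le (INR (b - a) * INR g) _ ltac:(nra) Hdiff.
  rewrite ln_mult; [|lra|lra].
  rewrite ln_mult; [|apply: exp_pos|apply: exp_pos].
  by rewrite /Rpower !ln_exp.
- rewrite -ln_1; apply: ln_le; lra.
- apply: ln_le; first lra.
  apply: Rle_trans (Rlt_le _ _ Hxm) _; apply: INR_leq; exact: ltnW.
Qed.

Theorem mainTheorem7 :
  abc_conjecture ->
  forall (k : nat) (eps : R), (3 <= k)%N -> 0 < eps ->
  exists c C : R, 0 < c /\ 0 < C /\
    forall x : R, C <= x ->
    forall m n : nat, k_full k m -> k_full k n ->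
      x < INR m <= x + c * Rpower x (1 - (2 + eps) / INR k) ->
      x < INR n <= x + c * Rpower x (1 - (2 + eps) / INR k) ->
      m = n.
Proof.
move=> Habc k eps Hk He.
have kR3 : 3 <= INR k by apply: Rle_trans (INR_leq 3 k Hk); simpl; lra.
have Hd : 0 < eps / INR k by apply: Rdiv_lt_0_compat; lra.
case: (Habc _ Hd) => K [HK HabcK].
exists (exp (-(Rabs (ln K) + 1) / (1 + eps / INR k))), 1.
split; first exact: exp_pos.
split; first lra.
move=> x Hx m n Hm Hn [Hm1 Hm2] [Hn1 Hn2].
case: (ltngtP m n) => h //.
- by exfalso; apply: (key k eps K x m n).
- by exfalso; apply: (key k eps K x n m).
Qed.
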